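(* Let $a,b$ be coprime integers with $0<a\le b$ and let $a/b=[0,u_1,\dots,u_n]$ be a simple continued fraction expansion of even depth $n=2i$ ($i\ge 1$), with convergents $p_k/q_k$. Let $D$ be the standard line $\{(x,y)\in\mathbb{Z}^2: 0\le ax-by<a+b\}$, let $U_1=(0,0)$ and $U_2=(b,a)$, let $L_1$ be the lower leaning point of $D$ with $0<x\le b$, and $L_2=L_1+(b,a)$. Then \[ \overrightarrow{U_1L_1}=(q_{2i-1}+1,\;p_{2i-1}-1),\qquad \overrightarrow{L_1U_2}=(u_{2i}-1)(q_{2i-1},p_{2i-1})+(q_{2i-2},p_{2i-2})+(-1,1). \] Moreover, the Freeman word of the DSS $[U_1L_1]$ has $E(z_{2i-2})^{u_{2i-1}}$ as a left factor (prefix), and the Freeman word of the DSS $[L_1U_2]$ has $E(z_{2i-1})^{u_{2i}-1}$ as a right factor (suffix).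
   Context: A standard line $\{\mu\le ax-by<\mu+|a|+|b|\}$ is a 4-connected path of lattice points; points with $ax-by=\mu$ are upper leaning points, those with $ax-by=\mu+|a|+|b|-1$ lower leaning points. For $P,Q\in D$, $[PQ]$ denotes the path of points of $D$ from $P$ to $Q$; its Freeman word records its unit moves, $0$ for $(1,0)$ and $1$ for $(0,1)$. For $a/b=[0,u_1,\dots,u_n]$, $z_k=p_k/q_k=[0,u_1,\dots,u_k]$ with $(p_0,q_0)=(0,1)$, $(p_{-1},q_{-1})=(1,0)$ and $(p_k,q_k)=u_k(p_{k-1},q_{k-1})+(p_{k-2},q_{k-2})$. Words: $E(z_0)=0$, $E(z_1)=0^{u_1}1$, $E(z_{2j+1})=E(z_{2j})^{u_{2j+1}}E(z_{2j-1})$, $E(z_{2j})=E(z_{2j-2})E(z_{2j-1})^{u_{2j}}$. *)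

(* Defs.v *)
From mathcomp Require Import all_boot all_order all_algebra.
Set Implicit Arguments. Unset Strict Implicit. Unset Printing Implicit Defensive.
Import Order.TTheory GRing.Theory Num.Theory.
Local Open Scope ring_scope.

Definition cfrac (u : nat -> nat) (n : nat) : rat :=
  foldr (fun (k : nat) (acc : rat) => ((u k)%:R + acc)^-1) 0 (iota 1 n).

(** (p_{k-1}, q_{k-1}), (p_k, q_k) with (p_{-1},q_{-1}) = (1,0),
    (p_0,q_0) = (0,1), (p_k,q_k) = u_k (p_{k-1},q_{k-1}) + (p_{k-2},q_{k-2}). *)
Fixpoint conv2 (u : nat -> nat) (k : nat) : (nat * nat) * (nat * nat) :=
  match k with
  | 0 => ((1, 0), (0, 1))
  | k'.+1 =>
      let: (pr, cu) := conv2 u k' in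
      (cu, (u k * cu.1 + pr.1, u k * cu.2 + pr.2))%N
  end.

Definition p_ (u : nat -> nat) (k : nat) : int := (conv2 u k).2.1.
Definition q_ (u : nat -> nat) (k : nat) : int := (conv2 u k).2.2.

Definition wpow (w : seq nat) (m : nat) : seq nat := flatten (nseq m w).

(** (E(z_{k-1}), E(z_k)); at k = 0 the first component is the auxiliary
    word [1], chosen so that the uniform recursion gives E(z_1) = 0^{u_1} 1.
    E(z_0) = 0, E(z_{2j+1}) = E(z_{2j})^{u_{2j+1}} E(z_{2j-1}),
    E(z_{2j}) = E(z_{2j-2}) E(z_{2j-1})^{u_{2j}}. *)
Fixpoint Ew2 (u : nat -> nat) (k : nat) : seq nat * seq nat :=
  match k with
  | 0 => ([:: 1%N], [:: 0%N])
  | k'.+1 =>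
      let: (prev, cur) := Ew2 u k' in
      (cur, if odd k then wpow cur (u k) ++ prev else prev ++ wpow cur (u k))
  end.

Definition E_ (u : nat -> nat) (k : nat) : seq nat := (Ew2 u k).2.

Definition inD (a b : nat) (P : int * int) : bool :=
  (0 <= a%:Z * P.1 - b%:Z * P.2) && (a%:Z * P.1 - b%:Z * P.2 < a%:Z + b%:Z).

Definition lower_leaning (a b : nat) (P : int * int) : Prop :=
  a%:Z * P.1 - b%:Z * P.2 = a%:Z + b%:Z - 1.

(** Freeman word (0 for (1,0), 1 for (0,1)) of the 4-connected path of points
    of D starting at P, of m steps: from a point of D, the next point is the
    neighbour (x+1,y) if it lies in D, otherwise (x,y+1). *)
Fixpoint fword (a b : nat) (P : int * int) (m : nat) : seq nat :=
  match m with
  | 0 => [::]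
  | m'.+1 =>
      if inD a b (P.1 + 1, P.2) then 0%N :: fword a b (P.1 + 1, P.2) m'
      else 1%N :: fword a b (P.1, P.2 + 1) m'
  end.

Definition freeman (a b : nat) (P Q : int * int) : seq nat :=
  fword a b P (absz ((Q.1 - P.1) + (Q.2 - P.2))%R).

(* Main.v *)
Require Import Defs.
From mathcomp Require Import all_boot all_order all_algebra.
From mathcomp Require Import zify ring lra.
Import Order.TTheory GRing.Theory Num.Theory.
Local Open Scope ring_scope.

Fixpoint wr (a b : nat) (r : int) (m : nat) : seq nat :=
  match m with
  | 0 => [::]
  | m'.+1 => if (0 <= r + a%:Z) && (r + a%:Z < a%:Z + b%:Z)
             then 0%N :: wr a b (r + a%:Z) m' else 1%N :: wr a b (r - b%:Z) m'
  end.

Lemma fword_wr a b P m : fword a b P m = wr a b (a%:Z * P.1 - b%:Z * P.2) m.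
Proof.
elim: m P => [//|m IH] [x y] /=.
rewrite /inD /= !IH /=.
have -> : a%:Z * (x + 1) - b%:Z * y = a%:Z * x - b%:Z * y + a%:Z by ring.
have -> : a%:Z * x - b%:Z * (y + 1) = a%:Z * x - b%:Z * y - b%:Z by ring.
by [].
Qed.

Definition disp (a b : nat) (w : seq nat) : int :=
  foldr (fun c acc => (if c == 0%N then a%:Z else - b%:Z) + acc) 0 w.

Lemma disp_cat a b w1 w2 : disp a b (w1 ++ w2) = disp a b w1 + disp a b w2.
Proof. by elim: w1 => [|c w IH] /=; rewrite ?add0r // IH addrA. Qed.

Lemma wpowS w m : wpow w m.+1 = w ++ wpow w m.
Proof. by []. Qed.

Lemma disp_wpow a b w m : disp a b (wpow w m) = m%:Z * disp a b w.
Proof.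
elim: m => [|m IH]; first by rewrite mul0r.
by rewrite wpowS disp_cat IH -addn1 PoszD mulrDl mul1r addrC.
Qed.

Lemma size_wpow w m : size (wpow w m) = (m * size w)%N.
Proof. by elim: m => [//|m IH]; rewrite wpowS size_cat IH mulSn. Qed.

Lemma wr_cat a b r m1 m2 :
  wr a b r (m1 + m2) = wr a b r m1 ++ wr a b (r + disp a b (wr a b r m1)) m2.
Proof.
elim: m1 r => [|m1 IH] r /=; first by rewrite addr0.
case: ifP => _ /=; rewrite IH /= addrA //.
Qed.

Definition readable a b w r := wr a b r (size w) = w.

Lemma readable_cat a b w1 w2 r :
  readable a b w1 r -> readable a b w2 (r + disp a b w1) -> readable a b (w1 ++ w2) r.
Proof. by rewrite /readable size_cat wr_cat => ->  ->. Qed.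

Lemma readable_pow a b w m r :
  (forall t, (t < m)%N -> readable a b w (r + t%:Z * disp a b w)) ->
  readable a b (wpow w m) r.
Proof.
elim: m r => [|m IH] r H; first by [].
rewrite wpowS; apply: readable_cat.
  by have := H 0%N isT; rewrite mul0r addr0.
apply: IH => t Ht; have := H t.+1 Ht.
by rewrite -addrA -addn1 PoszD mulrDl mul1r [disp a b w + _]addrC.
Qed.

Definition nz (c : nat) : bool := c != 0%N.
Lemma disp_count a b w :
  disp a b w = a%:Z * (size w)%:Z - (a%:Z + b%:Z) * (count nz w)%:Z.
Proof.
elim: w => [|c w IH] /=; first by rewrite !mulr0 subrr.
rewrite IH /nz; case: eqP => _ /=.
  rewrite add0n -addn1 PoszD; ring.
rewrite add1n -addn1 -(addn1 (count _ _)) !PoszD; ring.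
Qed.
Lemma wr_range a b r m : 0 <= r -> r < a%:Z + b%:Z ->
  0 <= r + disp a b (wr a b r m) /\ r + disp a b (wr a b r m) < a%:Z + b%:Z.
Proof.
elim: m r => [|m IH] r H1 H2 /=; first by rewrite addr0.
case: ifP => [/andP[h1 h2]|/negbT h]; rewrite addrA.
  exact: IH.
have hb : b%:Z <= r.
  move: h; rewrite negb_and -!ltNge => /orP[h|h]; lia.
apply: IH; lia.
Qed.
Lemma conv2S u k : conv2 u k.+1 =
  ((conv2 u k).2, (u k.+1 * (conv2 u k).2.1 + (conv2 u k).1.1,
                   u k.+1 * (conv2 u k).2.2 + (conv2 u k).1.2))%N.
Proof. by rewrite /=; case: (conv2 u k) => [[? ?] [? ?]]. Qed.

Lemma Ew2S u k : Ew2 u k.+1 = ((Ew2 u k).2,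
  if odd k.+1 then wpow (Ew2 u k).2 (u k.+1) ++ (Ew2 u k).1
  else (Ew2 u k).1 ++ wpow (Ew2 u k).2 (u k.+1)).
Proof. by rewrite [LHS]/=; case: (Ew2 u k). Qed.

Definition dl (a b : nat) (pq : nat * nat) : int := a%:Z * pq.2%:Z - b%:Z * pq.1%:Z.

Lemma dl_rec a b u k : dl a b (conv2 u k.+1).2 =
  (u k.+1)%:Z * dl a b (conv2 u k).2 + dl a b (conv2 u k).1.
Proof. rewrite conv2S /dl /= !PoszD !PoszM; ring. Qed.

Lemma dl_prev a b u k : dl a b (conv2 u k.+1).1 = dl a b (conv2 u k).2.
Proof. by rewrite conv2S. Qed.

Lemma Ew2_disp a b u k :
  [/\ disp a b (Ew2 u k).1 = dl a b (conv2 u k).1,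
      disp a b (Ew2 u k).2 = dl a b (conv2 u k).2,
      size (Ew2 u k).1 = ((conv2 u k).1.1 + (conv2 u k).1.2)%N &
      size (Ew2 u k).2 = ((conv2 u k).2.1 + (conv2 u k).2.2)%N].
Proof.
elim: k => [|k [h1 h2 h3 h4]].
  by split; rewrite /= /dl /=; ring.
rewrite Ew2S conv2S /=; split => //.
  case: ifP => _; rewrite disp_cat disp_wpow h1 h2 /dl /= !PoszD !PoszM; ring.
case: ifP => _; rewrite size_cat size_wpow h3 h4; lia.
Qed.

Lemma det u k : ((conv2 u k).1.1%:Z * (conv2 u k).2.2%:Z -
                 (conv2 u k).2.1%:Z * (conv2 u k).1.2%:Z) = (-1) ^+ k.
Proof.
elim: k => [|k IH]; first by rewrite /= expr0.
rewrite conv2S /= exprS -IH !PoszD !PoszM; ring.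
Qed.
Lemma qmono u k : (forall j, (1 <= j <= k)%N -> (0 < u j)%N) ->
  (1 <= (conv2 u k).2.2)%N /\ ((conv2 u k).1.2 <= (conv2 u k).2.2)%N.
Proof.
elim: k => [|k IH] Hu; first by [].
have [h1 h2] : (1 <= (conv2 u k).2.2)%N /\ ((conv2 u k).1.2 <= (conv2 u k).2.2)%N.
  by apply: IH => j /andP[j1 j2]; apply: Hu; rewrite j1 (leq_trans j2).
have := Hu k.+1; rewrite leqnn ltn0Sn => /(_ isT) hu.
rewrite conv2S /=; split; nia.
Qed.

Lemma cf_aux (P1 P2 Q1 Q2 U t : rat) : U + t != 0 -> Q1 + Q2 * (U + t) != 0 ->
  Q2 * t + (U * Q2 + Q1) != 0 ->
  (P1 / (U + t) + P2) / (Q1 / (U + t) + Q2) =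
  (P2 * t + (U * P2 + P1)) / (Q2 * t + (U * Q2 + Q1)).
Proof. by move=> h1 h2 h3; field; rewrite h1 h3 andbT.
Qed.

Lemma cfrac_gen u k : (forall j, (1 <= j <= k)%N -> (0 < u j)%N) ->
  forall t : rat, 0 <= t ->
  foldr (fun (j : nat) (acc : rat) => ((u j)%:R + acc)^-1) t (iota 1 k) =
  ((conv2 u k).1.1%:R * t + (conv2 u k).2.1%:R) /
  ((conv2 u k).1.2%:R * t + (conv2 u k).2.2%:R).
Proof.
elim: k => [|k IH] Hu t t0.
  by rewrite /= mul1r mul0r add0r addr0 divr1.
have Hu' : forall j, (1 <= j <= k)%N -> (0 < u j)%N.
  by move=> j /andP[j1 j2]; apply: Hu; rewrite j1 (leq_trans j2).
have [q1 q2] := qmono _ _ Hu'.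
have [q3 q4] := qmono _ _ Hu.
have := Hu k.+1; rewrite leqnn ltn0Sn => /(_ isT) hu.
have -> : iota 1 k.+1 = iota 1 k ++ [:: k.+1] by have := iotaD 1 k 1; rewrite addn1 add1n => ->.
rewrite foldr_cat conv2S /=.
have hut : 0 < (u k.+1)%:R + t :> rat.
  by apply: ltr_wpDr => //; rewrite ltr0n.
rewrite IH //; last by rewrite invr_ge0 ltW.
move: q3; rewrite conv2S /= => q3.
set P1 := (conv2 u k).1.1; set P2 := (conv2 u k).2.1.
set Q1 := (conv2 u k).1.2; set Q2 := (conv2 u k).2.2.
set U := u k.+1.
have hQ2 : 0 < Q2%:R :> rat by rewrite ltr0n.
have hD1 : 0 < Q1%:R * ((U%:R + t)^-1) + Q2%:R :> rat.
  apply: ltr_wpDl => //; apply: mulr_ge0; rewrite ?ler0n // invr_ge0 ltW //.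
have hD2 : 0 < Q2%:R * t + (U * Q2 + Q1)%N%:R :> rat.
  apply: ltr_wpDl; first by apply: mulr_ge0; rewrite ?ler0n.
  by rewrite ltr0n.
rewrite ?natrD ?natrM.
move: hD2; rewrite natrD natrM => hD2.
have hne : (U%:R + t) != 0 :> rat by rewrite gt_eqF.
have h1 : (Q1%:R + Q2%:R * (U%:R + t)) != 0 :> rat.
  rewrite gt_eqF //; apply: ltr_wpDl; rewrite ?ler0n //; apply: mulr_gt0 => //.
have h2 : (Q2%:R * t + (U%:R * Q2%:R + Q1%:R)) != 0 :> rat by rewrite gt_eqF.
exact: cf_aux.
Qed.
Lemma cfrac_val u n : (forall j, (1 <= j <= n)%N -> (0 < u j)%N) ->
  cfrac u n = (conv2 u n).2.1%:R / (conv2 u n).2.2%:R.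
Proof.
move=> Hu; rewrite /cfrac cfrac_gen //; by rewrite !mulr0 !add0r.
Qed.

Lemma pq_eq a b u n : (0 < a)%N -> (0 < b)%N -> coprime a b ->
  (forall j, (1 <= j <= n)%N -> (0 < u j)%N) ->
  a%:Q / b%:Q = cfrac u n -> ~~ odd n ->
  (conv2 u n).2.1 = a /\ (conv2 u n).2.2 = b.
Proof.
move=> a0 b0 cop Hu Hq ev.
have [q1 _] := qmono _ _ Hu.
move: Hq; rewrite cfrac_val // => /eqP; rewrite eqr_div ?pnatr_eq0 -?lt0n //.
rewrite -!natrM eqr_nat => /eqP E.
have D := det u n; rewrite -signr_odd (negbTE ev) expr0 in D.
move: D E q1.
set p0 := (conv2 u n).1.1; set q0 := (conv2 u n).1.2.
set p := (conv2 u n).2.1; set q := (conv2 u n).2.2.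
move=> D E q1.
have Ea : a%:Z = p%:Z * (b%:Z * p0%:Z - a%:Z * q0%:Z).
  rewrite -[LHS]mulr1 -D; apply/eqP; rewrite -subr_eq0.
  have -> : a%:Z * (p0%:Z * q%:Z - p%:Z * q0%:Z) - p%:Z * (b%:Z * p0%:Z - a%:Z * q0%:Z)
     = p0%:Z * (a%:Z * q%:Z - p%:Z * b%:Z) by ring.
  by rewrite -!PoszM E subrr mulr0.
have Eb : b%:Z = q%:Z * (b%:Z * p0%:Z - a%:Z * q0%:Z).
  rewrite -[LHS]mulr1 -D; apply/eqP; rewrite -subr_eq0.
  have -> : b%:Z * (p0%:Z * q%:Z - p%:Z * q0%:Z) - q%:Z * (b%:Z * p0%:Z - a%:Z * q0%:Z)
     = q0%:Z * (a%:Z * q%:Z - p%:Z * b%:Z) by ring.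
  by rewrite -!PoszM E subrr mulr0.
set k := (b%:Z * p0%:Z - a%:Z * q0%:Z) in Ea Eb.
have kpos : 0 < k by nia.
have [K kK] : exists K : nat, k = K%:Z.
  by exists (absz k); rewrite gez0_abs // ltW.
rewrite kK -PoszM in Ea Eb; move: Ea Eb => [Ea] [Eb].
have K1 : K = 1%N.
  apply/eqP; rewrite -dvdn1 -(eqP cop) dvdn_gcd.
  by rewrite Ea Eb !dvdn_mull.
by rewrite Ea Eb K1 !muln1.
Qed.
Lemma conv2_2 a b u m :
  dl a b (conv2 u m.+2).1 = (u m.+1)%:Z * dl a b (conv2 u m).2 + dl a b (conv2 u m).1 /\
  dl a b (conv2 u m.+2).2 = (u m.+2)%:Z * dl a b (conv2 u m.+2).1 + dl a b (conv2 u m).2.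
Proof. by rewrite dl_rec !dl_prev dl_rec. Qed.

Lemma signs a b u i : dl a b (conv2 u i.*2).2 = 0 -> dl a b (conv2 u i.*2).1 = -1 ->
  forall m, (m <= i)%N -> 0 <= dl a b (conv2 u m.*2).2 /\ dl a b (conv2 u m.*2).1 <= 0.
Proof.
move=> H0 H1 m hm.
have -> : m = (i - (i - m))%N by rewrite subKn.
have : (i - m <= i)%N by rewrite leq_subr.
elim: (i - m)%N => [|t IH] ht.
  by rewrite subn0 H0 H1.
have := IH (ltnW ht).
have -> : (i - t = (i - t.+1).+1)%N by rewrite subnS prednK // subn_gt0.
set m' := (i - t.+1)%N.
rewrite doubleS; have [e1 e2] := conv2_2 a b u m'.*2.
rewrite e2 e1 => -[h1 h2].
have hu1 : 0 <= (u m'.*2.+1)%:Z by [].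
have hu2 : 0 <= (u m'.*2.+2)%:Z by [].
set X := dl a b (conv2 u m'.*2).2 in h1 h2 *.
set Y := dl a b (conv2 u m'.*2).1 in h1 h2 *.
set Z := (u m'.*2.+1)%:Z * X + Y in h1 h2.
have hZ : (u m'.*2.+2)%:Z * Z <= 0 by apply: mulr_ge0_le0.
have hX : 0 <= X by lra.
have hX' : 0 <= (u m'.*2.+1)%:Z * X by apply: mulr_ge0.
split => //; rewrite /Z in h2; lra.
Qed.
Lemma step_lemma a b (E0 E1 : seq nat) (uk u1 u2 : nat) (x y : int) :
  0 <= x -> 0 <= y -> 0 <= x - u1%:Z * y -> 0 <= y - u2%:Z * (x - u1%:Z * y) ->
  disp a b E0 = x -> disp a b E1 = - y ->
  (forall s, 0 <= s -> s < uk%:Z * x + y -> readable a b E0 s) ->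
  (forall s, y <= s -> s < y + x -> readable a b E1 s) ->
  (forall s, 0 <= s -> s < u2%:Z * (x - u1%:Z * y) + (y - u2%:Z * (x - u1%:Z * y)) ->
      readable a b (E0 ++ wpow E1 u1) s) /\
  (forall s, y - u2%:Z * (x - u1%:Z * y) <= s ->
      s < (y - u2%:Z * (x - u1%:Z * y)) + (x - u1%:Z * y) ->
      readable a b (wpow (E0 ++ wpow E1 u1) u2 ++ E1) s).
Proof.
move=> hx hy hx' hy' d0 d1 R0 R1.
have dE2 : disp a b (E0 ++ wpow E1 u1) = x - u1%:Z * y.
  by rewrite disp_cat disp_wpow d0 d1 mulrN.
have hukx : 0 <= uk%:Z * x by apply: mulr_ge0.
have R2 : forall s, 0 <= s -> s < y -> readable a b (E0 ++ wpow E1 u1) s.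
  move=> s s0 s1; apply: readable_cat; first by apply: R0 => //; lra.
  apply: readable_pow => t ht; rewrite d0 d1; apply: R1.
    have h : 0 <= (u1%:Z - 1 - t%:Z) * y.
      apply: mulr_ge0 => //; rewrite subr_ge0; lia.
    nra.
  have : 0 <= t%:Z * y by apply: mulr_ge0.
  nra.
split.
  move=> s s0 s1; apply: R2 => //; lra.
move=> s s0 s1; apply: readable_cat.
  apply: readable_pow => t ht; rewrite dE2; apply: R2.
    have : 0 <= t%:Z * (x - u1%:Z * y) by apply: mulr_ge0.
    lra.
  have h : 0 <= (u2%:Z - 1 - t%:Z) * (x - u1%:Z * y).
    apply: mulr_ge0 => //; rewrite subr_ge0; lia.
  nra.
rewrite disp_wpow dE2; apply: R1.
  lra.
have : 0 <= u1%:Z * y by apply: mulr_ge0.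
lra.
Qed.
Lemma read0 a b s : 0 <= s -> s < b%:Z -> readable a b [:: 0%N] s.
Proof. by move=> h1 h2; rewrite /readable /=; case: ifP => //; lia. Qed.

Lemma read1 a b s : b%:Z <= s -> s < a%:Z + b%:Z -> readable a b [:: 1%N] s.
Proof. by move=> h1 h2; rewrite /readable /=; case: ifP => //; lia. Qed.

Lemma readQ a b u i : dl a b (conv2 u i.*2).2 = 0 -> dl a b (conv2 u i.*2).1 = -1 ->
  forall j, (j < i)%N ->
  (forall s, 0 <= s -> s < (u j.*2.+1)%:Z * dl a b (conv2 u j.*2.+1).1
                          - dl a b (conv2 u j.*2.+1).2 ->
     readable a b (Ew2 u j.*2.+1).1 s) /\
  (forall s, - dl a b (conv2 u j.*2.+1).2 <= s ->
     s < - dl a b (conv2 u j.*2.+1).2 + dl a b (conv2 u j.*2.+1).1 ->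
     readable a b (Ew2 u j.*2.+1).2 s).
Proof.
move=> H0 H1; have S := signs _ _ _ _ H0 H1.
elim=> [|j IH] hj.
  have [_ h2] := S 1%N hj.
  move: h2; rewrite /= /dl /= !muln0 !muln1 !addn0 !add0n /= => h2.
  split.
    move=> s s0 s1; apply: read0 => //; lia.
  move=> s s0 s1; apply: readable_cat.
    apply: readable_pow => t ht; apply: read0; rewrite /disp /=.
      have : 0 <= t%:Z * (a%:Z + 0) by apply: mulr_ge0; rewrite ?addr0.
      lia.
    nia.
  rewrite disp_wpow /disp /=; apply: read1; nia.
have [R0 R1] := IH (ltnW hj).
rewrite doubleS.
set k := j.*2.+1 in R0 R1 *.
have [xp Sx] : 0 <= dl a b (conv2 u k).1 /\ 0 <= - dl a b (conv2 u k).2.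
  have [h1 _] := S j (ltnW (ltnW hj)).
  have [_ h2] := S j.+1 (ltnW hj).
  move: h2; rewrite doubleS -/k dl_prev => h2.
  by rewrite /k dl_prev; split => //; rewrite oppr_ge0.
have [x'p y'p] : 0 <= dl a b (conv2 u k.+2).1 /\ 0 <= - dl a b (conv2 u k.+2).2.
  have [h1 _] := S j.+1 (ltnW hj).
  have [_ h2] := S j.+2 hj.
  move: h1 h2; rewrite !doubleS -/k !dl_prev => h1 h2.
  by split => //; rewrite oppr_ge0.
have [e1 e2] := conv2_2 a b u k.
set x := dl a b (conv2 u k).1 in xp Sx R0 R1 e1 e2 *.
set y := - dl a b (conv2 u k).2 in Sx R0 R1.
have ey : dl a b (conv2 u k).2 = - y by rewrite /y opprK.
rewrite ey in e1 e2.
have ex' : dl a b (conv2 u k.+2).1 = x - (u k.+1)%:Z * y by rewrite e1; ring.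
rewrite ex' in x'p e2; rewrite e2 in y'p.
have ey' : - dl a b (conv2 u k.+2).2 = y - (u k.+2)%:Z * (x - (u k.+1)%:Z * y).
  by rewrite e2; ring.
have [d0 d1 _ _] := Ew2_disp a b u k.
rewrite -/x in d0; rewrite ey in d1.
have [A B] := step_lemma _ _ _ _ (u j.*2.+1) (u k.+1) (u k.+2) _ _ xp Sx x'p
  (ltac:(by move: y'p; rewrite opprD opprK addrC)) d0 d1 R0 R1.
have EE : Ew2 u k.+2 = ((Ew2 u k).1 ++ wpow (Ew2 u k).2 (u k.+1),
     wpow ((Ew2 u k).1 ++ wpow (Ew2 u k).2 (u k.+1)) (u k.+2) ++ (Ew2 u k).2).
  by rewrite Ew2S Ew2S /= /k odd_double.
rewrite EE /=.
split => s s0 s1.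
  apply: A => //; move: s1; rewrite e2 ex'; lra.
apply: B.
  by move: s0; rewrite ey'.
by move: s1; rewrite ey' ex'.
Qed.
Lemma size_wr a b r m : size (wr a b r m) = m.
Proof. by elim: m r => [//|m IH] r /=; case: ifP => _ /=; rewrite IH. Qed.

Theorem proposition2 (a b : nat) (u : nat -> nat) (i : nat) (L1 : int * int) :
  (0 < a)%N -> (a <= b)%N -> coprime a b ->
  (1 <= i)%N ->
  (forall k, (1 <= k <= i.*2)%N -> (0 < u k)%N) ->
  (a%:Q / b%:Q = cfrac u i.*2) ->
  inD a b L1 -> lower_leaning a b L1 -> 0 < L1.1 <= b%:Z ->
  [/\ (L1.1 - 0, L1.2 - 0) = (q_ u i.*2.-1 + 1, p_ u i.*2.-1 - 1),
      (b%:Z - L1.1, a%:Z - L1.2) =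
        (((u i.*2)%:Z - 1) * q_ u i.*2.-1 + q_ u i.*2.-2 - 1,
         ((u i.*2)%:Z - 1) * p_ u i.*2.-1 + p_ u i.*2.-2 + 1),
      prefix (wpow (E_ u i.*2.-2) (u i.*2.-1)) (freeman a b (0, 0) L1)
    & suffix (wpow (E_ u i.*2.-1) (u i.*2 - 1)) (freeman a b L1 (b%:Z, a%:Z))].
Proof.
move=> a0 ab cop i1 Hu Hq _ HL Hx.
have b0 : (0 < b)%N by apply: leq_trans ab.
have [pa qb] := pq_eq a b u i.*2 a0 b0 cop Hu Hq (negbT (odd_double i)).
have H0 : dl a b (conv2 u i.*2).2 = 0 by rewrite /dl pa qb mulrC subrr.
have H1 : dl a b (conv2 u i.*2).1 = -1.
  have D := det u i.*2; rewrite -signr_odd odd_double expr0 pa qb in D.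
  rewrite /dl; lia.
have RQ := readQ a b u i H0 H1.
case: i i1 Hu Hq pa qb H0 H1 RQ => [//|i'] _ Hu _ pa qb H0 H1 RQ.
have [R0 R1] := RQ i' (ltnSn _).
rewrite doubleS in Hu pa qb H0 H1 *.
rewrite /= -/(E_ u i'.*2).
set k := i'.*2.+1 in R0 R1 H0 H1 pa qb Hu *.
have eP0 : p_ u i'.*2 = (conv2 u k).1.1 by rewrite /p_ /k conv2S.
have eQ0 : q_ u i'.*2 = (conv2 u k).1.2 by rewrite /q_ /k conv2S.
have eE0 : E_ u i'.*2 = (Ew2 u k).1 by rewrite /E_ /k Ew2S.
rewrite eP0 eQ0 eE0 /p_ /q_ /E_.
have dy : dl a b (conv2 u k).2 = -1 by rewrite -dl_prev.
have dx : dl a b (conv2 u k).1 = (u k.+1)%:Z.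
  by move: H0; rewrite dl_rec dy; lia.
rewrite dy dx in R0 R1.
have [d0 d1 s0 s1] := Ew2_disp a b u k.
rewrite dx in d0; rewrite dy in d1.
have [Q0p _] := qmono u i'.*2 (fun j hj => Hu j (ltac:(move: hj => /andP[h1 h2]; rewrite h1 /=; lia))).
have [Qp _] := qmono u k (fun j hj => Hu j (ltac:(move: hj => /andP[h1 h2]; rewrite h1 /=; lia))).
have un : (0 < u k.+1)%N by apply: Hu; rewrite ltn0Sn leqnn.
have uk : (0 < u k)%N by apply: Hu; rewrite /k; lia.
have eQ0' : (conv2 u i'.*2).2.2 = (conv2 u k).1.2 by rewrite /k conv2S.
rewrite eQ0' in Q0p.
have hPQ : (u k * ((conv2 u k).1.1 + (conv2 u k).1.2) <= (conv2 u k).2.1 + (conv2 u k).2.2)%N.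
  by rewrite /k conv2S /=; nia.
clearbody k.
move: pa qb; rewrite conv2S /= => pa qb.
move: dx dy Qp Q0p s0 s1 d0 d1 R0 R1 hPQ.
move: (conv2 u k) pa qb => [[P0 Q0] [P Q]] /= pa qb.
rewrite /dl /= => dx dy Qp Q0p s0 s1 d0 d1 R0 R1 hPQ.
move: (Ew2 u k) s0 s1 d0 d1 R0 R1 => [E0 E1] /= s0 s1 d0 d1 R0 R1.
move: (u k) (u k.+1) uk un pa qb dx R0 R1 d0 hPQ => V U uk un pa qb dx R0 R1 d0 hPQ.
case: L1 HL Hx => X Y; rewrite /lower_leaning /= => HL /andP[hX1 hX2].
have bQ : (Q < b)%N by have := leq_pmull Q un; lia.
have [eX eY] : X = (Q + 1)%N%:Z /\ Y = P%:Z - 1.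
  have aD : a%:Z * (X - (Q + 1)%N%:Z) = b%:Z * (Y - (P%:Z - 1)).
    apply/eqP; rewrite -subr_eq0.
    have -> : a%:Z * (X - (Q + 1)%N%:Z) - b%:Z * (Y - (P%:Z - 1)) =
      (a%:Z * X - b%:Z * Y) - (a%:Z * Q%:Z - b%:Z * P%:Z) - a%:Z - b%:Z by rewrite PoszD; ring.
    by rewrite HL dy; apply/eqP; ring.
  have hD : X - (Q + 1)%N%:Z = b%:Z * (P%:Z * (X - (Q + 1)%N%:Z) - Q%:Z * (Y - (P%:Z - 1))).
    apply/eqP; rewrite -subr_eq0.
    have -> : X - (Q + 1)%N%:Z - b%:Z * (P%:Z * (X - (Q + 1)%N%:Z) - Q%:Z * (Y - (P%:Z - 1)))
      = (X - (Q + 1)%N%:Z) * (1 + (a%:Z * Q%:Z - b%:Z * P%:Z))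
        - Q%:Z * (a%:Z * (X - (Q + 1)%N%:Z) - b%:Z * (Y - (P%:Z - 1))) by ring.
    by rewrite dy aD subrr mulr0 addrN mulr0 subrr.
  set K := (P%:Z * _ - _) in hD.
  have K0 : K = 0.
    have hb : 0 < b%:Z by rewrite ltz_nat.
    case: (ltrgtP K 0) => // hK.
      have : b%:Z * K <= b%:Z * (-1) by apply: ler_wpM2l; lia.
      lia.
    have : b%:Z * 1 <= b%:Z * K by apply: ler_wpM2l; lia.
    lia.
  rewrite K0 mulr0 in hD.
  have eX : X = (Q + 1)%N%:Z by apply/eqP; rewrite -subr_eq0 hD.
  split => //.
  move: aD; rewrite eX subrr mulr0 => /esym/eqP; rewrite mulf_eq0 => /orP[|].
    by move/eqP => hb; move: b0; rewrite -ltz_nat hb.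
  by rewrite subr_eq0 => /eqP.
subst X Y.
split.
- by rewrite !subr0 PoszD.
- rewrite -pa -qb !PoszD !PoszM; congr pair; ring.
- rewrite /freeman fword_wr /= !mulr0 subr0.
  have -> : absz ((Q + 1)%N%:Z - 0 + (P%:Z - 1 - 0)) = (V * (P0 + Q0) + (P + Q - V * (P0 + Q0)))%N.
    apply/eqP; rewrite -eqz_nat gez0_abs; [apply/eqP; lia | lia].
  rewrite wr_cat.
  have -> : wr a b 0 (V * (P0 + Q0)) = wpow E0 V.
    have R : readable a b (wpow E0 V) 0.
      apply: readable_pow => t ht; rewrite d0 add0r; apply: R0.
        by apply: mulr_ge0.
      have h : (t * U <= V * U)%N by rewrite leq_mul2r ltnW ?orbT.
      lia.
    by move: R; rewrite /readable size_wpow s0.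
  exact: prefix_prefix.
case: U un pa qb dx R0 R1 d0 => [//|U'] _ pa qb dx R0 R1 d0.
rewrite subn1 /=.
rewrite /freeman fword_wr /= HL.
have -> : absz (b%:Z - (Q + 1)%N%:Z + (a%:Z - (P%:Z - 1))) = ((P0 + Q0) + U' * (P + Q))%N.
  move: pa qb; rewrite !mulSn mulnDr => pa qb.
  apply/eqP; rewrite -eqz_nat gez0_abs; [apply/eqP; lia | lia].
rewrite wr_cat.
set r0 := a%:Z + b%:Z - 1.
set w0 := wr a b r0 (P0 + Q0).
have hab : 0 < a%:Z + b%:Z by lia.
have [g1 g2] := wr_range a b r0 (P0 + Q0) (ltac:(rewrite /r0; lia)) (ltac:(rewrite /r0; lia)).
have hsz : size w0 = (P0 + Q0)%N.
  by rewrite /w0 size_wr.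
have hU : (U' < b)%N.
  have := leq_pmulr U'.+1 Qp; lia.
have -> : r0 + disp a b w0 = U'%:Z.
  move: g1 g2; rewrite -/w0 disp_count hsz.
  set c := count nz w0 => g1 g2.
  have E : r0 + (a%:Z * (P0 + Q0)%N%:Z - (a%:Z + b%:Z) * c%:Z) =
           U'%:Z + (a%:Z + b%:Z) * (1 + P0%:Z - c%:Z).
    apply/eqP; rewrite -subr_eq0.
    have -> : r0 + (a%:Z * (P0 + Q0)%N%:Z - (a%:Z + b%:Z) * c%:Z) -
       (U'%:Z + (a%:Z + b%:Z) * (1 + P0%:Z - c%:Z)) =
       (a%:Z * Q0%:Z - b%:Z * P0%:Z) - (U'%:Z + 1) by rewrite /r0 PoszD; ring.
    by rewrite dx -addn1 PoszD subrr.
  rewrite E in g1 g2 *.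
  set K := (1 + P0%:Z - c%:Z) in g1 g2 *.
  have K0 : K = 0.
    case: (ltrgtP K 0) => // hK.
      have : (a%:Z + b%:Z) * K <= (a%:Z + b%:Z) * (-1) by apply: ler_wpM2l; lia.
      lia.
    have : (a%:Z + b%:Z) * 1 <= (a%:Z + b%:Z) * K by apply: ler_wpM2l; lia.
    lia.
  by rewrite K0 mulr0 addr0.
have -> : wr a b U'%:Z (U' * (P + Q)) = wpow E1 U'.
  have R : readable a b (wpow E1 U') U'%:Z.
    apply: readable_pow => t ht; rewrite d1; apply: R1; lia.
  by move: R; rewrite /readable size_wpow s1.
exact: suffix_suffix.
Qed.
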